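(* Let $S$ be a $\Gamma$-semiring with zero having a left unity and a right unity, and let $L$ be its left operator semiring. Let $\sigma,\sigma_1,\sigma_2\in FI(S)$ and $\mu,\mu_1,\mu_2\in FI(L)$. Then: (i) $\sigma^{+'}\in FI(L)$; moreover, if $\sigma$ is non-constant then $\sigma^{+'}$ is non-constant; (ii) $(\sigma^{+'})^{+}=\sigma$; (iii) $\sigma_1\neq\sigma_2$ implies $\sigma_1^{+'}\neq\sigma_2^{+'}$; (iv) $(\sigma_1\oplus\sigma_2)^{+'}=\sigma_1^{+'}\oplus\sigma_2^{+'}$; (v) $(\sigma_1\cap\sigma_2)^{+'}=\sigma_1^{+'}\cap\sigma_2^{+'}$; (vi) $\sigma_1\subseteq\sigma_2$ implies $\sigma_1^{+'}\subseteq\sigma_2^{+'}$; (vii) $\mu^{+}\in FI(S)$; moreover, if $\mu$ is non-constant then $\mu^{+}$ is non-constant; (viii) $(\mu^{+})^{+'}=\mu$; (ix) $\mu_1\subseteq\mu_2$ implies $\mu_1^{+}\subseteq\mu_2^{+}$.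
   Context: A $\Gamma$-semiring: $S$ and $\Gamma$ are additive commutative semigroups with a map $S\times\Gamma\times S\to S$, $(a,\alpha,b)\mapsto a\alpha b$, such that $(a+b)\alpha c=a\alpha c+b\alpha c$, $a\alpha(b+c)=a\alpha b+a\alpha c$, $a(\alpha+\beta)b=a\alpha b+a\beta b$, $a\alpha(b\beta c)=(a\alpha b)\beta c$. With zero: $(S,+)$, $(\Gamma,+)$ are monoids, $0_S\alpha x=0_S=x\alpha0_S$, $x0_\Gamma y=0_S$. Left operator semiring $L$: $F$ is the free additive commutative semigroup on $S\times\Gamma$; $\sum_i(x_i,\alpha_i)\,\rho\,\sum_j(y_j,\beta_j)$ iff $\sum_ix_i\alpha_ia=\sum_jy_j\beta_ja$ for all $a\in S$; $L=F/\rho$, classes written $\sum_i[x_i,\alpha_i]$, with multiplication $(\sum_i[x_i,\alpha_i])(\sum_j[y_j,\beta_j])=\sum_{i,j}[x_i\alpha_iy_j,\beta_j]$; its zero is $[0,\gamma]$ (any $\gamma\in\Gamma$). A left unity of $S$ is $\sum_i[e_i,\delta_i]\in L$ with $\sum_ie_i\delta_ia=a$ for all $a\in S$; a right unity is a finite family $\gamma_j\in\Gamma,f_j\in S$ with $\sum_ja\gamma_jf_j=a$ for all $a\in S$. A fuzzy subset is a map into $[0,1]$. A fuzzy ideal of $S$ is a fuzzy subset $\mu$, not identically $0$, with $\mu(x+y)\ge\min[\mu(x),\mu(y)]$, $\mu(x\gamma y)\ge\mu(y)$ and $\mu(x\gamma y)\ge\mu(x)$ for all $x,y\in S,\gamma\in\Gamma$.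 A fuzzy ideal of the semiring $L$ is a fuzzy subset $\mu$, not identically $0$, with $\mu(p+q)\ge\min[\mu(p),\mu(q)]$, $\mu(pq)\ge\mu(q)$, $\mu(pq)\ge\mu(p)$. Convention: every fuzzy ideal of $S$ or of $L$ is assumed to satisfy $\mu(0)=1$. $FI(S)$, $FI(L)$ denote the sets of fuzzy ideals. For a fuzzy subset $\mu$ of $L$: $\mu^{+}(x)=\inf_{\gamma\in\Gamma}\mu([x,\gamma])$ ($x\in S$). For a fuzzy subset $\sigma$ of $S$: $\sigma^{+'}(\sum_i[x_i,\alpha_i])=\inf_{s\in S}\sigma(\sum_ix_i\alpha_is)$. For fuzzy ideals $\mu_1,\mu_2$ (of $S$, resp. of $L$): $(\mu_1\oplus\mu_2)(x)=\sup\{\min[\mu_1(u),\mu_2(v)]:x=u+v\}$; $\cap$ is the pointwise minimum and $\subseteq$ is pointwise $\le$. *)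

(* Defs.v *)
From mathcomp Require Import all_boot all_order all_algebra.
From mathcomp Require Import boolp classical_sets reals.
Set Implicit Arguments. Unset Strict Implicit. Unset Printing Implicit Defensive.
Import Order.TTheory GRing.Theory Num.Theory.
Local Open Scope ring_scope.
Local Open Scope classical_set_scope.

Section GammaSemiring.
Variables (S G : nmodType) (tm : S -> G -> S -> S).

Definition gamma_semiring_zero : Prop :=
  [/\ (forall a b c al, tm (a + b) al c = tm a al c + tm b al c),
      (forall a b c al, tm a al (b + c) = tm a al b + tm a al c),
      (forall a b al be, tm a (al + be) b = tm a al b + tm a be b),
      (forall a b c al be, tm a al (tm b be c) = tm (tm a al b) be c) &
      (forall x y al, [/\ tm 0 al x = 0, tm x al 0 = 0 & tm x 0 y = 0])].

Definition opfun (l : seq (S * G)) : S -> S :=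
  fun a => \sum_(p <- l) tm p.1 p.2 a.

(* Left operator semiring: L = F / rho.  Two formal sums are rho-related iff
   they have the same operator, so the class of l is identified with opfun l. *)
Definition L := {f : S -> S | exists l : seq (S * G), f = opfun l}.

Definition cls (l : seq (S * G)) : L := exist _ (opfun l) (ex_intro _ l erefl).

Definition rep (p : L) : seq (S * G) :=
  proj1_sig (cid (proj2_sig p)).

Definition Ladd (p q : L) : L := cls (rep p ++ rep q).
Definition lmul (l1 l2 : seq (S * G)) : seq (S * G) :=
  [seq (tm x.1 x.2 y.1, y.2) | x <- l1, y <- l2].
Definition Lmul (p q : L) : L := cls (lmul (rep p) (rep q)).
Definition Lzero : L := cls [:: (0, 0)].

Definition has_left_unity : Prop :=
  exists l : seq (S * G), forall a, \sum_(p <- l) tm p.1 p.2 a = a.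
Definition has_right_unity : Prop :=
  exists r : seq (G * S), forall a, \sum_(p <- r) tm a p.1 p.2 = a.

Variable R : realType.

Definition fuzzy (T : Type) (m : T -> R) : Prop := forall x, 0 <= m x <= 1.

Definition FI_S (s : S -> R) : Prop :=
  [/\ fuzzy s, exists x, s x != 0,
      forall x y, s (x + y) >= Num.min (s x) (s y),
      forall x y al, s (tm x al y) >= s y /\ s (tm x al y) >= s x
    & s 0 = 1].

Definition FI_L (m : L -> R) : Prop :=
  [/\ fuzzy m, exists x, m x != 0,
      forall p q, m (Ladd p q) >= Num.min (m p) (m q),
      forall p q, m (Lmul p q) >= m q /\ m (Lmul p q) >= m p
    & m Lzero = 1].

Definition plus (m : L -> R) : S -> R :=
  fun x => inf [set m (cls [:: (x, g)]) | g in [set: G]].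

Definition plus' (s : S -> R) : L -> R :=
  fun p => inf [set s (proj1_sig p a) | a in [set: S]].

Definition oplusS (s1 s2 : S -> R) : S -> R :=
  fun x => sup [set r | exists u v, x = u + v /\ r = Num.min (s1 u) (s2 v)].
Definition oplusL (m1 m2 : L -> R) : L -> R :=
  fun x => sup [set r | exists u v, x = Ladd u v /\ r = Num.min (m1 u) (m2 v)].

Definition capf (T : Type) (m1 m2 : T -> R) : T -> R :=
  fun x => Num.min (m1 x) (m2 x).
Definition subf (T : Type) (m1 m2 : T -> R) : Prop := forall x, m1 x <= m2 x.
Definition nonconstant (T : Type) (m : T -> R) : Prop := exists x y, m x <> m y.

End GammaSemiring.

Arguments FI_L {S G} tm {R} m.
Arguments plus {S G} tm {R} m x.
Arguments plus' {S G} tm {R} s p.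
Arguments oplusL {S G} tm {R} m1 m2 x.

(* Main.v *)
Require Import Defs.
From mathcomp Require Import all_boot all_order all_algebra.
From mathcomp Require Import boolp classical_sets reals.
Set Implicit Arguments. Unset Strict Implicit. Unset Printing Implicit Defensive.
Import Order.TTheory GRing.Theory Num.Theory.
Local Open Scope ring_scope.
Local Open Scope classical_set_scope.

Section Alg.
Variables (S G : nmodType) (tm : S -> G -> S -> S).
Hypothesis HS : gamma_semiring_zero tm.

Lemma tmDl a b c al : tm (a + b) al c = tm a al c + tm b al c.
Proof. by case: HS. Qed.
Lemma tmDr a b c al : tm a al (b + c) = tm a al b + tm a al c.
Proof. by case: HS. Qed.
Lemma tmA a b c al be : tm a al (tm b be c) = tm (tm a al b) be c.
Proof. by case: HS. Qed.
Lemma tm0l (al : G) (y : S) : tm 0 al y = 0.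
Proof. by case: HS => _ _ _ _ /(_ y y al) []. Qed.
Lemma tmr0 x al : tm x al 0 = 0.
Proof. by case: HS => _ _ _ _ /(_ x x al) []. Qed.

Lemma tm_sumr (I : Type) x al (r : seq I) (F : I -> S) :
  tm x al (\sum_(i <- r) F i) = \sum_(i <- r) tm x al (F i).
Proof.
elim: r => [|i r IH]; first by rewrite !big_nil tmr0.
by rewrite !big_cons tmDr IH.
Qed.
Lemma tm_suml (I : Type) al y (r : seq I) (F : I -> S) :
  tm (\sum_(i <- r) F i) al y = \sum_(i <- r) tm (F i) al y.
Proof.
elim: r => [|i r IH]; first by rewrite !big_nil tm0l.
by rewrite !big_cons tmDl IH.
Qed.

Lemma opfunD l a b : opfun tm l (a + b) = opfun tm l a + opfun tm l b.
Proof. by rewrite /opfun -big_split; apply: eq_bigr => i _; rewrite tmDr. Qed.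
Lemma opfun0 l : opfun tm l 0 = 0.
Proof. by rewrite /opfun big1 // => i _; rewrite tmr0. Qed.
Lemma opfunA l a g b : opfun tm l (tm a g b) = tm (opfun tm l a) g b.
Proof. by rewrite /opfun tm_suml; apply: eq_bigr => i _; rewrite tmA. Qed.
Lemma opfun_cat l1 l2 a : opfun tm (l1 ++ l2) a = opfun tm l1 a + opfun tm l2 a.
Proof. by rewrite /opfun big_cat. Qed.
Lemma opfun1 x g a : opfun tm [:: (x, g)] a = tm x g a.
Proof. by rewrite /opfun big_seq1. Qed.
Lemma opfun_lmul l1 l2 a : opfun tm (lmul tm l1 l2) a = opfun tm l1 (opfun tm l2 a).
Proof.
rewrite /opfun /lmul big_allpairs_dep /=; apply: eq_bigr => x _.
by rewrite tm_sumr; apply: eq_bigr => y _; rewrite tmA.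
Qed.

Lemma valE (p : L tm) : proj1_sig p = opfun tm (rep p).
Proof. exact: (proj2_sig (cid (proj2_sig p))). Qed.

Lemma vD (p : L tm) a b : proj1_sig p (a + b) = proj1_sig p a + proj1_sig p b.
Proof. by rewrite valE opfunD. Qed.
Lemma v0 (p : L tm) : proj1_sig p 0 = 0.
Proof. by rewrite valE opfun0. Qed.
Lemma vA (p : L tm) a g b : proj1_sig p (tm a g b) = tm (proj1_sig p a) g b.
Proof. by rewrite valE opfunA. Qed.
Lemma vsum (p : L tm) (I : Type) (r : seq I) F :
  proj1_sig p (\sum_(i <- r) F i) = \sum_(i <- r) proj1_sig p (F i).
Proof.
elim: r => [|i r IH]; first by rewrite !big_nil v0.
by rewrite !big_cons vD IH.
Qed.

Lemma Ladd_val (p q : L tm) a : proj1_sig (Ladd p q) a = proj1_sig p a + proj1_sig q a.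
Proof. by rewrite /= opfun_cat -!valE. Qed.
Lemma Lmul_val (p q : L tm) a : proj1_sig (Lmul p q) a = proj1_sig p (proj1_sig q a).
Proof. by rewrite /= opfun_lmul -!valE. Qed.
Lemma Lzero_val a : proj1_sig (Lzero tm) a = 0.
Proof. by rewrite /= opfun1 tm0l. Qed.
Lemma cls_val l a : proj1_sig (cls tm l) a = opfun tm l a.
Proof. by []. Qed.

Lemma Leq (p q : L tm) : (forall a, proj1_sig p a = proj1_sig q a) -> p = q.
Proof.
move: p q => [f hf] [g hg] /= H.
have E : f = g by apply: funext.
subst g; congr exist; apply: Prop_irrelevance.
Qed.

Lemma left_unity_decomp (lu : seq (S * G)) (p : L tm) a :
  (forall a, \sum_(q <- lu) tm q.1 q.2 a = a) ->
  proj1_sig p a = \sum_(q <- lu) tm (proj1_sig p q.1) q.2 a.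
Proof.
move=> Hl; rewrite -{1}(Hl a) vsum; apply: eq_bigr => q _; by rewrite vA.
Qed.
End Alg.

Section RealAux.
Variable R : realType.

Lemma infi_le (T : Type) (F : T -> R) x :
  (forall t, 0 <= F t) -> inf [set F t | t in [set: T]] <= F x.
Proof.
move=> H; apply: ge_inf; last by exists x.
by exists 0 => _ [t _ <-].
Qed.

Lemma le_infi (T : Type) (F : T -> R) (t0 : T) c :
  (forall t, c <= F t) -> c <= inf [set F t | t in [set: T]].
Proof.
move=> H; apply: lb_le_inf; first by exists (F t0), t0.
by move=> _ [t _ <-].
Qed.

Lemma sup_ge (E : set R) x : (forall y, E y -> y <= 1) -> E x -> x <= sup E.
Proof. by move=> H Ex; apply: ub_le_sup => //; exists 1. Qed.

Lemma sup_le (E : set R) c : (exists x, E x) -> (forall y, E y -> y <= c) -> sup E <= c.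
Proof. by move=> [x Ex] H; apply: ge_sup => //; exists x. Qed.

Lemma min_le2 (a b c d : R) : a <= c -> b <= d -> Num.min a b <= Num.min c d.
Proof. by move=> h1 h2; rewrite le_min !ge_min h1 h2 orbT. Qed.

Lemma find_le (T : Type) (add : T -> T -> T) (z : T) (f : T -> R) :
  f z = 1 -> (forall x, f x <= 1) ->
  (forall x y, Num.min (f x) (f y) <= f (add x y)) ->
  forall (I : Type) (r : seq I) (F : I -> T),
  f (foldr (fun i acc => add (F i) acc) z r) = 1 \/
  exists i, f (F i) <= f (foldr (fun i acc => add (F i) acc) z r).
Proof.
move=> fz f1 fadd I r F; elim: r => [|i r IH] /=; first by left.
have := fadd (F i) (foldr (fun i acc => add (F i) acc) z r).
rewrite ge_min => /orP [H|H]; first by right; exists i.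
case: IH => [E|[j Hj]].
- left; apply/eqP; rewrite eq_le f1 /=; by rewrite -E.
- by right; exists j; apply: le_trans H.
Qed.
End RealAux.

Section Main.
Variables (S G : nmodType) (tm : S -> G -> S -> S) (R : realType).
Hypothesis HS : gamma_semiring_zero tm.
Local Notation LL := (L tm).
Local Notation val := (@proj1_sig _ _).

Section FS.
Variable s : S -> R.
Hypothesis Hs : FI_S tm s.

Lemma fs01 x : 0 <= s x /\ s x <= 1.
Proof. by case: Hs => /(_ x) /andP. Qed.
Lemma fs0 : s 0 = 1. Proof. by case: Hs. Qed.
Lemma fsadd x y : Num.min (s x) (s y) <= s (x + y). Proof. by case: Hs. Qed.
Lemma fs_tm_r x al y : s y <= s (tm x al y).
Proof. by case: Hs => _ _ _ /(_ x y al) []. Qed.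
Lemma fs_tm_l x al y : s x <= s (tm x al y).
Proof. by case: Hs => _ _ _ /(_ x y al) []. Qed.

Lemma fs_sum (I : Type) (r : seq I) F c :
  c <= 1 -> (forall i, c <= s (F i)) -> c <= s (\sum_(i <- r) F i).
Proof.
move=> c1 H; elim: r => [|i r IH]; first by rewrite big_nil fs0.
rewrite big_cons; apply: le_trans (fsadd _ _).
by rewrite le_min H IH.
Qed.

Lemma fs_val (p : LL) a : s a <= s (val p a).
Proof.
rewrite (valE p) /opfun; apply: fs_sum; first by case: (fs01 a).
by move=> i; apply: fs_tm_r.
Qed.
End FS.

Lemma plus'_ge0 (s : S -> R) p : (forall x, 0 <= s x) -> 0 <= plus' tm s p.
Proof. by move=> H; apply: (le_infi 0). Qed.
Lemma plus'_le (s : S -> R) p a : (forall x, 0 <= s x) -> plus' tm s p <= s (val p a).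
Proof. by move=> H; apply: (infi_le (F := fun a => s (val p a))). Qed.
Lemma plus'_le1 (s : S -> R) p : (forall x, 0 <= s x) -> (forall x, s x <= 1) ->
   plus' tm s p <= 1.
Proof. by move=> H H1; apply: le_trans (plus'_le p 0 H) (H1 _). Qed.

Lemma plus_ge0 (m : LL -> R) x : (forall p, 0 <= m p) -> 0 <= plus tm m x.
Proof. by move=> H; apply: (le_infi 0). Qed.
Lemma plus_le (m : LL -> R) x g : (forall p, 0 <= m p) ->
  plus tm m x <= m (cls tm [:: (x, g)]).
Proof. by move=> H; apply: (infi_le (F := fun g => m (cls tm [:: (x, g)]))). Qed.
Lemma plus_le1 (m : LL -> R) x : (forall p, 0 <= m p) -> (forall p, m p <= 1) ->
   plus tm m x <= 1.
Proof. by move=> H H1; apply: le_trans (plus_le x 0 H) (H1 _). Qed.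

Lemma sum_foldr (I : Type) (r : seq I) (F : I -> S) :
  \sum_(i <- r) F i = foldr (fun i acc => F i + acc) 0 r.
Proof. by elim: r => [|i r IH]; rewrite ?big_nil ?big_cons ?IH. Qed.

Lemma Lfoldr_val (I : Type) (r : seq I) (F : I -> LL) a :
  val (foldr (fun i acc => Ladd (F i) acc) (Lzero tm) r) a = \sum_(i <- r) val (F i) a.
Proof.
elim: r => [|i r IH]; first by rewrite big_nil (Lzero_val HS).
by rewrite big_cons [foldr _ _ _]/= Ladd_val IH.
Qed.

Lemma part2 (s : S -> R) : FI_S tm s -> has_right_unity tm -> plus tm (plus' tm s) = s.
Proof.
move=> Hs [r Hr]; have H0 x := (fs01 Hs x).1; have H1 x := (fs01 Hs x).2.
have P0 p : 0 <= plus' tm s p by apply: plus'_ge0.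
apply: funext => x; apply/eqP; rewrite eq_le; apply/andP; split; last first.
  apply: (le_infi 0) => g; apply: (le_infi 0) => a.
  by rewrite cls_val opfun1; apply: fs_tm_l.
have := find_le (fs0 Hs) H1 (fsadd Hs) r (fun q => tm x q.1 q.2).
rewrite -sum_foldr Hr => -[->|[j Hj]].
  exact: plus_le1 P0 (fun p => plus'_le1 p H0 H1).
apply: le_trans (plus_le x j.1 P0) _; apply: le_trans (plus'_le _ j.2 H0) _.
by rewrite cls_val opfun1.
Qed.


Lemma plus'_Lzero (s : S -> R) : FI_S tm s -> plus' tm s (Lzero tm) = 1.
Proof.
move=> Hs; have H0 x := (fs01 Hs x).1; have H1 x := (fs01 Hs x).2.
apply/eqP; rewrite eq_le plus'_le1 //=; apply: (le_infi 0) => a.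
by rewrite (Lzero_val HS) (fs0 Hs).
Qed.

Lemma part1a (s : S -> R) : FI_S tm s -> FI_L tm (plus' tm s).
Proof.
move=> Hs; have H0 x := (fs01 Hs x).1; have H1 x := (fs01 Hs x).2.
split.
- by move=> p; rewrite plus'_ge0 // plus'_le1.
- by exists (Lzero tm); rewrite plus'_Lzero // oner_neq0.
- move=> p q; apply: (le_infi 0) => a; rewrite Ladd_val.
  apply: le_trans (fsadd Hs _ _); exact: min_le2 (plus'_le _ _ H0) (plus'_le _ _ H0).
- move=> p q; split; apply: (le_infi 0) => a; rewrite (Lmul_val HS).
    exact: le_trans (plus'_le _ _ H0) (fs_val Hs _ _).
  exact: plus'_le.
- exact: plus'_Lzero.
Qed.

Lemma cls0 g : cls tm [:: (0, g)] = Lzero tm.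
Proof. by apply: Leq => a; rewrite cls_val opfun1 (Lzero_val HS) tm0l. Qed.

Lemma part7a (m : LL -> R) : FI_L tm m -> FI_S tm (plus tm m).
Proof.
move=> [fz [p0 _] fadd fmul m0].
have H0 p : 0 <= m p by case/andP: (fz p).
have H1 p : m p <= 1 by case/andP: (fz p).
have P0 : plus tm m 0 = 1.
  apply/eqP; rewrite eq_le plus_le1 //=; apply: (le_infi 0) => g.
  by rewrite cls0 m0.
split.
- by move=> x; rewrite plus_ge0 // plus_le1.
- by exists 0; rewrite P0 oner_neq0.
- move=> x y; apply: (le_infi 0) => g.
  have -> : cls tm [:: (x + y, g)] = Ladd (cls tm [:: (x, g)]) (cls tm [:: (y, g)]).
    by apply: Leq => a; rewrite Ladd_val !cls_val !opfun1 (tmDl HS).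
  apply: le_trans (fadd _ _); exact: min_le2 (plus_le _ _ H0) (plus_le _ _ H0).
- move=> x y al; split; apply: (le_infi 0) => g;
  (have -> : cls tm [:: (tm x al y, g)] = Lmul (cls tm [:: (x, al)]) (cls tm [:: (y, g)])
    by apply: Leq => a; rewrite (Lmul_val HS) !cls_val !opfun1 (tmA HS));
  have [h1 h2] := fmul (cls tm [:: (x, al)]) (cls tm [:: (y, g)]).
    exact: le_trans (plus_le _ _ H0) h1.
  exact: le_trans (plus_le _ _ H0) h2.
- exact: P0.
Qed.

Lemma part8 (m : LL -> R) : FI_L tm m -> has_left_unity tm -> plus' tm (plus tm m) = m.
Proof.
move=> Hm [lu Hlu]; have [fz _ fadd fmul m0] := Hm.
have H0 p : 0 <= m p by case/andP: (fz p).
have H1 p : m p <= 1 by case/andP: (fz p).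
have P0 x : 0 <= plus tm m x by apply: plus_ge0.
apply: funext => p; apply/eqP; rewrite eq_le; apply/andP; split; last first.
  apply: (le_infi 0) => a; apply: (le_infi 0) => g.
  have -> : cls tm [:: (val p a, g)] = Lmul p (cls tm [:: (a, g)]).
    by apply: Leq => b; rewrite (Lmul_val HS) !cls_val !opfun1 (vA HS).
  by case: (fmul p (cls tm [:: (a, g)])).
have Ep : p = foldr (fun q acc => Ladd ((fun q => cls tm [:: (val p q.1, q.2)]) q) acc)
                 (Lzero tm) lu.
  apply: Leq => a; rewrite Lfoldr_val (left_unity_decomp HS p a Hlu).
  by apply: eq_bigr => q _; rewrite cls_val opfun1.
have := find_le m0 H1 fadd lu (fun q => cls tm [:: (val p q.1, q.2)]).
rewrite -Ep => -[->|[j Hj]].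
  exact: plus'_le1 P0 (fun x => plus_le1 x H0 H1).
apply: le_trans (plus'_le _ j.1 P0) _; apply: le_trans (plus_le _ j.2 H0) _.
exact: Hj.
Qed.

Lemma part5 (s1 s2 : S -> R) : FI_S tm s1 -> FI_S tm s2 ->
  plus' tm (capf s1 s2) = capf (plus' tm s1) (plus' tm s2).
Proof.
move=> Hs1 Hs2; have A0 x := (fs01 Hs1 x).1; have B0 x := (fs01 Hs2 x).1.
have C0 x : 0 <= capf s1 s2 x by rewrite /capf le_min A0 B0.
apply: funext => p; apply/eqP; rewrite eq_le; apply/andP; split.
  rewrite /capf le_min; apply/andP; split; apply: (le_infi 0) => a;
  apply: le_trans (plus'_le _ a C0) _; by rewrite /capf ge_min lexx ?orbT.
apply: (le_infi 0) => a; rewrite /capf; exact: min_le2 (plus'_le _ _ A0) (plus'_le _ _ B0).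
Qed.

Lemma part6 (s1 s2 : S -> R) : FI_S tm s1 -> subf s1 s2 -> subf (plus' tm s1) (plus' tm s2).
Proof.
move=> Hs1 H p; have A0 x := (fs01 Hs1 x).1.
apply: (le_infi 0) => a; exact: le_trans (plus'_le _ a A0) (H _).
Qed.

Lemma part9 (m1 m2 : LL -> R) : FI_L tm m1 -> subf m1 m2 -> subf (plus tm m1) (plus tm m2).
Proof.
move=> [fz _ _ _ _] H x; have A0 p : 0 <= m1 p by case/andP: (fz p).
apply: (le_infi 0) => g; exact: le_trans (plus_le _ g A0) (H _).
Qed.


Lemma part4 (s1 s2 : S -> R) : FI_S tm s1 -> FI_S tm s2 -> has_left_unity tm ->
  plus' tm (oplusS s1 s2) = oplusL tm (plus' tm s1) (plus' tm s2).
Proof.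
move=> Hs1 Hs2 [lu Hlu].
have A0 x := (fs01 Hs1 x).1; have A1 x := (fs01 Hs1 x).2.
have B0 x := (fs01 Hs2 x).1; have B1 x := (fs01 Hs2 x).2.
pose E x := [set r | exists u v, x = u + v /\ r = Num.min (s1 u) (s2 v)].
have Eub x y : E x y -> y <= 1.
  by move=> [u [v [_ ->]]]; rewrite ge_min A1.
have Ein x : E x (Num.min (s1 x) (s2 0)) by exists x, 0; rewrite addr0.
have O0 x : 0 <= oplusS s1 s2 x.
  apply: le_trans (sup_ge (Eub x) (Ein x)); by rewrite le_min A0 B0.
have O1 x : oplusS s1 s2 x <= 1.
  by apply: sup_le; [exists (Num.min (s1 x) (s2 0)); exact: (Ein x) | exact: (Eub x)].
pose EL p := [set r | exists u v, p = Ladd u v /\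
                 r = Num.min (plus' tm s1 u) (plus' tm s2 v)].
have ELub p y : EL p y -> y <= 1.
  by move=> [u [v [_ ->]]]; rewrite ge_min plus'_le1.
apply: funext => p; apply/eqP; rewrite eq_le; apply/andP; split; last first.
  apply: sup_le.
    exists (Num.min (plus' tm s1 p) (plus' tm s2 (Lzero tm))), p, (Lzero tm); split => //.
    by apply: Leq => a; rewrite Ladd_val (Lzero_val HS) addr0.
  move=> _ [u [v [-> ->]]]; apply: (le_infi 0) => a; rewrite Ladd_val.
  apply: le_trans (sup_ge (Eub _) _); last by exists (val u a), (val v a).
  exact: min_le2 (plus'_le _ _ A0) (plus'_le _ _ B0).
set c := plus' tm (oplusS s1 s2) p.
have c1 : c <= 1 by apply: plus'_le1.
have cle x : c <= oplusS s1 s2 (val p x) by apply: plus'_le.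
apply/ler_addgt0Pr => e e0.
have hx x : exists uv : S * S, x = uv.1 + uv.2 /\
                 oplusS s1 s2 x - e < Num.min (s1 uv.1) (s2 uv.2).
  have hs : has_sup (E x) by split; [exists (Num.min (s1 x) (s2 0)); apply: Ein | exists 1; apply: Eub].
  have [r [u [v [Hx Hr']]] Hlt] := sup_adherent e0 hs.
  by exists (u, v); split => //=; rewrite -Hr'.
have [f Hf] := choice hx.
pose U := cls tm [seq ((f (val p q.1)).1, q.2) | q <- lu].
pose V := cls tm [seq ((f (val p q.1)).2, q.2) | q <- lu].
have EpUV : p = Ladd U V.
  apply: Leq => a; rewrite Ladd_val !cls_val /opfun !big_map -big_split.
  rewrite (left_unity_decomp HS p a Hlu); apply: eq_bigr => q _ /=.
  by rewrite -(tmDl HS) -(Hf (val p q.1)).1.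
rewrite -lerBlDr; apply: le_trans (sup_ge (ELub p) _); last first.
  by exists U, V; split.
have key (q : S * G) : c - e <= Num.min (s1 (f (val p q.1)).1) (s2 (f (val p q.1)).2).
  apply: ltW; apply: le_lt_trans (Hf _).2; by rewrite lerD2r.
have ce1 : c - e <= 1 by apply: le_trans c1; rewrite lerBlDr lerDl ltW.
rewrite le_min; apply/andP; split; apply: (le_infi 0) => a;
  rewrite cls_val /opfun big_map; apply: fs_sum => // q /=.
  apply: (le_trans _ (fs_tm_l Hs1 (f (val p q.1)).1 q.2 a)); apply: le_trans (key q) _; by rewrite ge_min lexx.
apply: (le_trans _ (fs_tm_l Hs2 (f (val p q.1)).2 q.2 a)); apply: le_trans (key q) _; by rewrite ge_min lexx orbT.
Qed.


Lemma part1b (s : S -> R) : FI_S tm s -> has_right_unity tm ->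
  nonconstant s -> nonconstant (plus' tm s).
Proof.
move=> Hs Hru [x [y Hxy]]; apply: contrapT => Hnc; apply: Hxy.
have Hc : plus' tm s = fun _ => plus' tm s (Lzero tm).
  apply: funext => p; apply: contrapT => Hne; apply: Hnc; by exists p, (Lzero tm).
have E := part2 Hs Hru; move: E; rewrite Hc.
move: (plus' tm s (Lzero tm)) => c E.
by rewrite -(congr1 (fun f => f x) E) -(congr1 (fun f => f y) E).
Qed.

Lemma part7b (m : LL -> R) : FI_L tm m -> has_left_unity tm ->
  nonconstant m -> nonconstant (plus tm m).
Proof.
move=> Hm Hlu [x [y Hxy]]; apply: contrapT => Hnc; apply: Hxy.
have Hc : plus tm m = fun _ => plus tm m 0.
  apply: funext => p; apply: contrapT => Hne; apply: Hnc; by exists p, 0.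
have E := part8 Hm Hlu; move: E; rewrite Hc.
move: (plus tm m 0) => c E.
by rewrite -(congr1 (fun f => f x) E) -(congr1 (fun f => f y) E).
Qed.

End Main.

Theorem proposition3p3 (S G : nmodType) (tm : S -> G -> S -> S) (R : realType)
  (HS : gamma_semiring_zero tm)
  (Hlu : has_left_unity tm) (Hru : has_right_unity tm)
  (s s1 s2 : S -> R) (m m1 m2 : L tm -> R)
  (Hs : FI_S tm s) (Hs1 : FI_S tm s1) (Hs2 : FI_S tm s2)
  (Hm : FI_L tm m) (Hm1 : FI_L tm m1) (Hm2 : FI_L tm m2) :
     (FI_L tm (plus' tm s) /\ (nonconstant s -> nonconstant (plus' tm s))) /\
      plus tm (plus' tm s) = s /\
      (s1 <> s2 -> plus' tm s1 <> plus' tm s2) /\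
      plus' tm (oplusS s1 s2) = oplusL tm (plus' tm s1) (plus' tm s2) /\
      plus' tm (capf s1 s2) = capf (plus' tm s1) (plus' tm s2) /\
      (subf s1 s2 -> subf (plus' tm s1) (plus' tm s2)) /\
      (FI_S tm (plus tm m) /\ (nonconstant m -> nonconstant (plus tm m))) /\
      plus' tm (plus tm m) = m /\
      (subf m1 m2 -> subf (plus tm m1) (plus tm m2)).
Proof.
split; first by split; [exact: part1a | exact: part1b].
split; first exact: part2.
split.
  move=> Hne E; apply: Hne.
  by rewrite -(part2 Hs1 Hru) -(part2 Hs2 Hru) E.
split; first exact: part4.
split; first exact: part5.
split; first exact: part6.
split; first by split; [exact: part7a | exact: part7b].
split; first exact: part8.
exact: part9.
Qed.
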